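(* For every integer $n\ge 3$, $\tilde{R}(\dot A_2^{(b)}\sqcup \dot A_2^{(r)},Q_n)=n+2$.
   Context: $A_2$ is the antichain on two vertices; $\dot A_2^{(b)}$ is it colored blue and $\dot A_2^{(r)}$ colored red. The parallel composition $\dot P_1\sqcup\dot P_2$ is the colored poset consisting of disjoint copies of $\dot P_1$ and $\dot P_2$ with every vertex of one incomparable to every vertex of the other; so $\dot A_2^{(b)}\sqcup \dot A_2^{(r)}$ is an antichain of four vertices, two blue and two red. $Q_N$ is the Boolean lattice of all subsets of an $N$-element set ordered by inclusion. In a blue/red coloring of $Q_N$, a copy of a colored poset $\dot P$ is an induced subposet isomorphic to $P$ with matching colors. The poset Erdős–Hajnal number $\tilde{R}(\dot P,Q_n)$ is the minimum $N$ such that every blue/red coloring of $Q_N$ contains a copy of $\dot P$ or a monochromatic induced copy of $Q_n$. *)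

(* Defs.v *)
From mathcomp Require Import all_boot.
Set Implicit Arguments. Unset Strict Implicit. Unset Printing Implicit Defensive.

Definition blue := true.
Definition red := false.

Record cposet := CPoset {
  cp_T :> finType;
  cp_le : rel cp_T;
  cp_col : cp_T -> bool }.

Definition Qle (N : nat) : rel {set 'I_N} := fun A B => A \subset B.

Definition induced_embedding (T U : finType) (leT : rel T) (leU : rel U)
  (f : T -> U) : Prop :=
  injective f /\ forall x y, leT x y = leU (f x) (f y).

Definition has_copy (P : cposet) (N : nat) (c : {set 'I_N} -> bool) : Prop :=
  exists f : P -> {set 'I_N},
    induced_embedding (@cp_le P) (@Qle N) f /\ forall x, c (f x) = cp_col x.

Definition has_mono_Q (n N : nat) (c : {set 'I_N} -> bool) : Prop :=
  exists (f : {set 'I_n} -> {set 'I_N}) (b : bool),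
    induced_embedding (@Qle n) (@Qle N) f /\ forall A, c (f A) = b.

Definition EH_arrows (P : cposet) (n N : nat) : Prop :=
  forall c : {set 'I_N} -> bool, has_copy P c \/ has_mono_Q n c.

Definition is_poset_EH_number (P : cposet) (n R : nat) : Prop :=
  EH_arrows P n R /\ forall N, N < R -> ~ EH_arrows P n N.

Definition antichain2 (col : bool) : cposet :=
  @CPoset 'I_2 (fun x y => x == y) (fun _ => col).

Definition par_le (P1 P2 : cposet) : rel (P1 + P2)%type :=
  fun x y => match x, y with
             | inl a, inl b => cp_le a b
             | inr a, inr b => cp_le a b
             | _, _ => false
             end.
Definition par_col (P1 P2 : cposet) (x : (P1 + P2)%type) : bool :=
  match x with inl a => cp_col a | inr a => cp_col a end.
Definition par_comp (P1 P2 : cposet) : cposet :=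
  @CPoset (P1 + P2)%type (@par_le P1 P2) (@par_col P1 P2).

(* Main.v *)
Require Import Defs.
From mathcomp Require Import all_boot zify.
From Stdlib Require Import Classical.
Set Implicit Arguments. Unset Strict Implicit. Unset Printing Implicit Defensive.

Definition inc (N : nat) (A B : {set 'I_N}) := ~~ (A \subset B) && ~~ (B \subset A).

Lemma incW N (A B : {set 'I_N}) p q :
  p \in A -> p \notin B -> q \in B -> q \notin A -> inc A B.
Proof.
move=> pA pB qB qA; rewrite /inc; apply/andP; split; apply/negP => /subsetP H.
  by move: (H p pA); rewrite (negbTE pB).
by move: (H q qB); rewrite (negbTE qA).
Qed.

Lemma incC N (A B : {set 'I_N}) : inc A B -> inc B A.
Proof. by rewrite /inc andbC. Qed.

Lemma outside N (W : {set 'I_N}) : #|W| < N -> exists x, x \notin W.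
Proof.
move=> h; case: (pickP (fun x => x \notin W)) => [x Hx|H]; first by exists x.
have : W = setT by apply/setP => x; rewrite inE; have := H x => /= /negbFE.
by move=> E; rewrite E cardsT card_ord ltnn in h.
Qed.

Definition PP := par_comp (antichain2 blue) (antichain2 red).

Lemma P_of N (c : {set 'I_N} -> bool) u1 u2 v1 v2 :
  c u1 = true -> c u2 = true -> c v1 = false -> c v2 = false ->
  inc u1 u2 -> inc v1 v2 -> inc u1 v1 -> inc u1 v2 -> inc u2 v1 -> inc u2 v2 ->
  has_copy PP c.
Proof.
move=> c1 c2 c3 c4 /andP[h1 h1'] /andP[h2 h2'] /andP[h3 h3'] /andP[h4 h4']
  /andP[h5 h5'] /andP[h6 h6'].
pose f (x : PP) : {set 'I_N} := match x with
  | inl i => if i == ord0 then u1 else u2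
  | inr i => if i == ord0 then v1 else v2 end.
have le : forall x y, @cp_le PP x y = Qle (f x) (f y).
  move=> [[[|[|//]]] i|[[|[|//]]] i] [[[|[|//]]] j|[[|[|//]]] j] /=;
  rewrite /Qle ?subxx //; apply/esym/negbTE => //.
exists f; split; last first.
  by move=> [[[|[|//]]] i|[[|[|//]]] i].
split => // x y E; have := le x y; rewrite E /Qle subxx.
move: x y {E} => [[[|[|//]]] i|[[|[|//]]] i] [[[|[|//]]] j|[[|[|//]]] j] //=.
all: by move=> _; congr (_ _); apply: val_inj.
Qed.

Lemma P_of' N (c : {set 'I_N} -> bool) k u1 u2 v1 v2 :
  c u1 = k -> c u2 = k -> c v1 = ~~ k -> c v2 = ~~ k ->
  inc u1 u2 -> inc v1 v2 -> inc u1 v1 -> inc u1 v2 -> inc u2 v1 -> inc u2 v2 ->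
  has_copy PP c.
Proof.
case: k => /= c1 c2 c3 c4 h1 h2 h3 h4 h5 h6; first exact: (P_of c1 c2 c3 c4).
apply: (P_of c3 c4 c1 c2) => //; exact: incC.
Qed.


Definition chainS n k : {set 'I_n} := [set i : 'I_n | i < k].

Lemma chain_card n N (f : {set 'I_n} -> {set 'I_N}) :
  induced_embedding (@Qle n) (@Qle N) f ->
  forall j k, j <= k -> k <= n -> #|f (chainS n j)| + (k - j) <= #|f (chainS n k)|.
Proof.
move=> [inj le] j; elim=> [|k IH] jk kn.
  by move: jk; rewrite leqn0 => /eqP ->; rewrite subnn addn0.
case: (ltngtP j k.+1) jk => // [jk|->] _; last by rewrite subnn addn0.
have {}IH := IH jk (ltnW kn).
have sub : f (chainS n k) \proper f (chainS n k.+1).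
  rewrite properE; apply/andP; split.
    rewrite -[_ \subset _]/(Qle _ _) -le /Qle.
    by apply/subsetP => i; rewrite !inE => /ltnW.
  rewrite -[_ \subset _]/(Qle _ _) -le /Qle.
  apply/subsetPn; exists (Ordinal kn); rewrite !inE //= ltnn //.
have := proper_card sub; lia.
Qed.

Definition lowcol N (S : {set 'I_N}) := (S != set0) && (S != setT).

Lemma lower n N : 3 <= n -> N < n + 2 -> ~ EH_arrows PP n N.
Proof.
move=> n3 hN H; case: (H (@lowcol N)).
  move=> [f [[inj le] col]].
  have red2 : forall x : 'I_2, f (inr x) = set0 \/ f (inr x) = setT.
    move=> x; have := col (inr x); rewrite /lowcol /=.
    case: eqP => [->|_]; first by left.
    by case: eqP => [->|_]; [right|].
  pose x : PP := inr ord0; pose y : PP := inr (@Ordinal 2 1 isT).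
  have lxy := le x y; have lyx := le y x.
  rewrite /= /Qle in lxy lyx.
  case: (red2 ord0) => E1.
    by rewrite /x E1 sub0set in lxy.
  case: (red2 (@Ordinal 2 1 isT)) => E2.
    by rewrite /y E2 sub0set in lyx.
  by have := inj x y; rewrite /x /y E1 E2 => /(_ erefl).
move=> [f [b [emb col]]].
have cc := chain_card emb.
have h01 := cc 0 1 isT (ltnW (ltnW n3)).
have h1n := cc 1 n (ltnW (ltnW n3)) (leqnn n).
have h0n := cc 0 n isT (leqnn n).
have mx : forall S : {set 'I_N}, #|S| <= N by move=> S; have := max_card (mem S); rewrite card_ord.
have b1 : b = true.
  rewrite -(col (chainS n 1)) /lowcol; apply/andP; split; apply/eqP => E.
    by move: h01; rewrite E cards0 /=; lia.
  by rewrite E cardsT card_ord in h1n; have := mx (f (chainS n n)); lia.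
have c0 := col (chainS n 0); have cn := col (chainS n n).
rewrite b1 /lowcol in c0 cn.
case/andP: c0 => /eqP c0 _; case/andP: cn => _ /eqP cn.
have p0 : 0 < #|f (chainS n 0)| by rewrite card_gt0; apply/eqP.
have pn : #|f (chainS n n)| < N.
  rewrite ltn_neqAle mx andbT; apply/negP => /eqP E; apply: cn.
  apply/eqP; rewrite eqEcard subsetT cardsT card_ord E //.
  lia.
lia.
Qed.


Definition inL N (a b : 'I_N) (S : {set 'I_N}) := (a \in S) && (b \notin S).
Definition mid N (a b : 'I_N) (S : {set 'I_N}) :=
  [&& a \in S, b \notin S, S != [set a] & S != [set~ b]].
Definition deg N (c : {set 'I_N} -> bool) (a b : 'I_N) :=
  [forall u : {set 'I_N}, forall v : {set 'I_N},
    (inL a b u && inL a b v && inc u v) ==> (c u == c v)].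

Lemma degP N c (a b : 'I_N) u v : deg c a b -> inL a b u -> inL a b v -> inc u v -> c u = c v.
Proof.
move=> /forallP /(_ u) /forallP /(_ v) H h1 h2 h3; apply/eqP; apply: (implyP H).
by rewrite h1 h2 h3.
Qed.

Lemma ndegP N c (a b : 'I_N) : ~~ deg c a b ->
  exists u v, [/\ inL a b u, inL a b v, inc u v & c v = ~~ c u].
Proof.
move=> /forallPn [u] /forallPn [v]; rewrite negb_imply => /andP[/andP[/andP[h1 h2] h3] h4].
exists u, v; split => //; move: h4; by case: (c u); case: (c v).
Qed.

Lemma cross N (a b : 'I_N) x y : inL a b x -> inL b a y -> inc x y.
Proof. by move=> /andP[ax bx] /andP[bY aY]; apply: (incW ax aY bY bx). Qed.

Lemma degOr N (c : {set 'I_N} -> bool) a b : ~ has_copy PP c -> deg c a b \/ deg c b a.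
Proof.
move=> nP; case: (boolP (deg c a b)) => [|/ndegP [u [v [h1 h2 h3 h4]]]]; first by left.
case: (boolP (deg c b a)) => [|/ndegP [u' [v' [h1' h2' h3' h4']]]]; first by right.
exfalso; apply: nP.
have uu' := cross h1 h1'; have uv' := cross h1 h2'; have vu' := cross h2 h1'.
have vv' := cross h2 h2'.
case E: (c u' == c u).
  move/eqP: E => E.
  apply: (@P_of' _ c (c u) u u' v v') => //; first by rewrite h4' E.
  exact: incC.
have E' : c v' = c u by move: E h4'; case: (c u); case: (c u') => //= _ ->.
have E'' : c u' = ~~ c u by move: E; case: (c u); case: (c u').
apply: (@P_of' _ c (c u) u v' v u') => //; by apply: incC.
Qed.

Lemma degmid_aux N (c : {set 'I_N} -> bool) a b s t : deg c a b -> mid a b s -> mid a b t ->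
  s \subset t -> c s = c t.
Proof.
move=> D /and4P[as_ bs s1 s2] /and4P[at_ bt t1 t2] st.
have [i [is_ ia]] : exists i, i \in s /\ i != a.
  case: (pickP (fun i => (i \in s) && (i != a))) => [i /andP[]|H]; first by exists i.
  exfalso; move/eqP: s1; apply; apply/setP => x; rewrite inE.
  have := H x; case: eqP => [->|_]; first by rewrite as_.
  by rewrite andbT => ->.
have [j [jt jb]] : exists j, j \notin t /\ j != b.
  case: (pickP (fun j => (j \notin t) && (j != b))) => [j /andP[]|H]; first by exists j.
  exfalso; move/eqP: t2; apply; apply/setP => x; rewrite !inE.
  have := H x; case: eqP => [->|_]; first by rewrite (negbTE bt).
  by rewrite andbT => /negbFE ->.
have it : i \in t by apply: (subsetP st).
have js : j \notin s by apply/negP => /(subsetP st); rewrite (negbTE jt).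
pose z := j |: (t :\ i).
have zL : inL a b z.
  rewrite /inL /z !inE at_ (negbTE bt) [a == i]eq_sym (negbTE ia) [b == j]eq_sym (negbTE jb).
  by rewrite orbT andbF.
have jz : j \in z by rewrite !inE eqxx.
have iz : i \notin z.
  rewrite !inE eqxx /= orbF; apply/negP => /eqP E; by rewrite -E it in jt.
have ct : c z = c t.
  apply: (degP D zL) => //; first by rewrite /inL at_ bt.
  exact: (incW jz jt it iz).
have cs : c z = c s.
  apply: (degP D zL) => //; first by rewrite /inL as_ bs.
  exact: (incW jz js is_ iz).
by rewrite -cs ct.
Qed.

Lemma degmid N (c : {set 'I_N} -> bool) a b s t : deg c a b -> mid a b s -> mid a b t ->
  c s = c t.
Proof.
move=> D ms mt.
case: (boolP (s \subset t)) => st; first exact: (degmid_aux D ms mt st).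
case: (boolP (t \subset s)) => ts; first exact/esym/(degmid_aux D mt ms ts).
apply: (degP D) => //.
- by case/and4P: ms => *; apply/andP.
- by case/and4P: mt => *; apply/andP.
- by apply/andP.
Qed.

Lemma mono_of n (c : {set 'I_(n+2)} -> bool) a b k : a != b ->
  (forall S, inL a b S -> c S = k) -> has_mono_Q n c.
Proof.
move=> ab H.
pose A := ~: [set a; b].
have hA : n = #|A|.
  have := cardsC [set a; b]; rewrite cards2 ab card_ord /A; lia.
pose e (i : 'I_n) : 'I_(n+2) := enum_val (cast_ord hA i).
have einj : injective e.
  by move=> i j /enum_val_inj /cast_ord_inj.
have eA : forall i, e i \in A by move=> i; apply: enum_valP.
have ea : forall i, e i != a.
  by move=> i; have := eA i; rewrite !inE negb_or => /andP[].
have eb : forall i, e i != b.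
  by move=> i; have := eA i; rewrite !inE negb_or => /andP[].
pose f (X : {set 'I_n}) := a |: (e @: X).
have le : forall X Y, Qle X Y = Qle (f X) (f Y).
  move=> X Y; rewrite /Qle /f; apply/idP/idP => h.
    by apply: setUS; apply: imsetS.
  apply/subsetP => x xX.
  have : e x \in a |: (e @: Y).
    by apply: (subsetP h); rewrite !inE (mem_imset _ _ einj) xX orbT.
  by rewrite !inE (negbTE (ea x)) /= (mem_imset _ _ einj).
exists f, k; split.
  split => // X Y E; apply/eqP; rewrite eqEsubset.
  by rewrite -![_ \subset _]/(Qle _ _) !le E /Qle subxx.
move=> X; apply: H; rewrite /inL /f !inE eqxx /= eq_sym (negbTE ab) /=.
apply/imsetP => [[x _ E]]; by move: (eb x); rewrite -E eqxx.
Qed.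


Ltac neq := repeat match goal with
 | H : is_true (?x != ?y) |- context [?x == ?y] => rewrite (negbTE H)
 | H : is_true (?x != ?y) |- context [?y == ?x] => rewrite [y == x]eq_sym (negbTE H)
 end.

Lemma cardU1le N (x : 'I_N) (A : {set 'I_N}) : #|x |: A| <= #|A|.+1.
Proof. by rewrite cardsU1; case: (x \notin A). Qed.

Lemma cardUle N (A B : {set 'I_N}) : #|A :|: B| <= #|A| + #|B|.
Proof. rewrite cardsU; lia. Qed.

Lemma cardS2 N (x y : 'I_N) : #|[set x; y]| <= 2.
Proof. by apply: (leq_trans (cardUle _ _)); rewrite !cards1. Qed.

Lemma cardS3 N (x y z : 'I_N) : #|[set x; y; z]| <= 3.
Proof. by apply: (leq_trans (cardUle _ _)); rewrite cards1 addn1 ltnS cardS2. Qed.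

Lemma cardS4 N (x y z w : 'I_N) : #|[set x; y; z; w]| <= 4.
Proof. by apply: (leq_trans (cardUle _ _)); rewrite cards1 addn1 ltnS cardS3. Qed.

Lemma two_out N (W : {set 'I_N}) : #|W| + 2 <= N ->
  exists x y, [/\ x \notin W, y \notin W & x != y].
Proof.
move=> h; have h1 : #|W| < N by lia.
have [x xW] := outside h1.
have h2 : #|x |: W| < N.
  by move: (cardU1le x W) h; set p := #|x |: W|; set q := #|W|; lia.
have [y yW] := outside h2.
move: yW; rewrite !inE negb_or => /andP[yx yW].
by exists x, y; split => //; rewrite eq_sym.
Qed.

Lemma notset1 N (S : {set 'I_N}) a e : e \in S -> e != a -> S != [set a].
Proof. by move=> eS ea; apply/eqP => E; move: eS; rewrite E inE (negbTE ea). Qed.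

Lemma notsetC1 N (S : {set 'I_N}) b : #|S| + 2 <= N -> S != [set~ b].
Proof.
move=> h; apply/eqP => E; move: h; rewrite E cardsC1 card_ord; lia.
Qed.

Lemma overlap N (a b c d : 'I_N) : 5 <= N -> a != b -> c != d -> a != d -> b != c ->
  exists U, mid a b U /\ mid c d U.
Proof.
move=> N5 ab cd ad bc.
have h4 : #|[set a; b; c; d]| < N.
  by move: (cardS4 a b c d) N5; set p := #|[set a; b; c; d]|; lia.
have [e eW] := outside h4.
move: eW; rewrite !inE !negb_or => /andP[/andP[/andP[ea eb] ec] ed].
have cU : #|[set a; c; e]| + 2 <= N.
  by move: (cardS3 a c e) N5; set p := #|[set a; c; e]|; lia.
exists [set a; c; e]; split; apply/and4P; split.
- by rewrite !inE eqxx.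
- by rewrite !inE; neq.
- by apply: (@notset1 _ _ _ e); rewrite ?inE ?eqxx ?orbT.
- exact: notsetC1.
- by rewrite !inE eqxx orbT.
- by rewrite !inE; neq.
- by apply: (@notset1 _ _ _ e); rewrite ?inE ?eqxx ?orbT.
- exact: notsetC1.
Qed.


Lemma two_out3 N (p q r : 'I_N) : 5 <= N -> exists x y,
  (x != p) /\ (x != q) /\ (x != r) /\ (y != p) /\ (y != q) /\ (y != r) /\ (x != y).
Proof.
move=> N5.
have h : #|[set p; q; r]| + 2 <= N by move: (cardS3 p q r) N5; set k := #|[set p; q; r]|; lia.
have [x [y [xW yW xy]]] := two_out h.
move: xW yW; rewrite !inE !negb_or => /andP[/andP[xp xq] xr] /andP[/andP[yp yq] yr].
by exists x, y.
Qed.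

Lemma link N (col : {set 'I_N} -> bool) a b c d S T : 5 <= N ->
  a != b -> c != d -> a != d -> b != c -> deg col a b -> deg col c d ->
  mid a b S -> mid c d T -> col S = col T.
Proof.
move=> N5 ab cd ad bc D1 D2 mS mT.
have [U [m1 m2]] := overlap N5 ab cd ad bc.
by rewrite (degmid D1 mS m1) (degmid D2 m2 mT).
Qed.

Lemma const N (col : {set 'I_N} -> bool) a b c d S T : 5 <= N -> ~ has_copy PP col ->
  a != b -> c != d -> deg col a b -> deg col c d ->
  mid a b S -> mid c d T -> col S = col T.
Proof.
move=> N5 nP ab cd D1 D2 mS mT.
case: (boolP ((a != d) && (b != c))) => [/andP[ad bc]|H]; first exact: (link N5 ab cd ad bc).
have [x [y [xa [xb [xc [xd [ya [yb [yc [yd xy]]]]]]]]]] : exists x y,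
  (x != a) /\ (x != b) /\ (x != c) /\ (x != d) /\
  (y != a) /\ (y != b) /\ (y != c) /\ (y != d) /\ (x != y).
  move: H; rewrite negb_and !negbK => /orP[/eqP E|/eqP E]; subst.
    have [x [y [xa [xb [xc [ya [yb [yc xy]]]]]]]] := two_out3 d b c N5.
    by exists x, y.
  have [x [y [xa [xb [xc [ya [yb [yc xy]]]]]]]] := two_out3 a c d N5.
  by exists x, y.
have yx : y != x by rewrite eq_sym.
have ay : a != y by rewrite eq_sym.
have ax : a != x by rewrite eq_sym.
have bx : b != x by rewrite eq_sym.
have by_ : b != y by rewrite eq_sym.
case: (@degOr _ col x y nP) => D.
  have [U [_ mU]] := overlap N5 xy xy xy yx.
  by rewrite (link N5 ab xy ay bx D1 D mS mU) (link N5 xy cd xd yc D D2 mU mT).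
have [U [_ mU]] := overlap N5 yx yx yx xy.
by rewrite (link N5 ab yx ax by_ D1 D mS mU) (link N5 yx cd yd xc D D2 mU mT).
Qed.


Ltac mem := rewrite ?inE ?eqxx ?orbT ?orTb //=; neq; rewrite ?orbF ?orFb ?andbT //=.

Lemma three_out N (W : {set 'I_N}) : #|W| + 3 <= N ->
  exists x y z, [/\ x \notin W, y \notin W, z \notin W, (x != y) /\ (x != z) & y != z].
Proof.
move=> h; have hh : #|W| + 2 <= N by lia.
have [x [y [xW yW xy]]] := two_out hh.
have h2 : #|[set x; y] :|: W| < N.
  apply: (leq_ltn_trans (cardUle [set x; y] W)).
  apply: (@leq_ltn_trans (2 + #|W|)); first by rewrite leq_add2r cardS2.
  rewrite addnC; lia.
have [z zW] := outside h2.
move: zW; rewrite !inE !negb_or => /andP[/andP[zx zy] zW].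
exists x, y, z; split => //; last by rewrite eq_sym.
by split => //; rewrite eq_sym.
Qed.

Lemma card_set1_ge N (S : {set 'I_N}) a : 2 <= #|S| -> S != [set a].
Proof. by move=> h; apply/eqP => E; move: h; rewrite E cards1. Qed.

Lemma bool_neq (x k : bool) : x != k -> x = ~~ k.
Proof. by case: x; case: k. Qed.

Lemma main n (col : {set 'I_(n+2)} -> bool) : 3 <= n ->
  ~ has_copy PP col -> ~ has_mono_Q n col -> False.
Proof.
move=> n3 nP nM.
have N5 : 5 <= n + 2 by lia.
have [a0 [b0 [ab0 D0]]] : exists a0 b0, a0 != b0 /\ deg col a0 b0.
  have h : #|(set0 : {set 'I_(n+2)})| + 2 <= n + 2 by rewrite cards0 add0n leq_addl.
  have [x [y [_ _ xy]]] := two_out h.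
  case: (@degOr _ col x y nP) => D; first by exists x, y.
  by exists y, x; split => //; rewrite eq_sym.
have ba0 : b0 != a0 by rewrite eq_sym.
have [m0 [mm0 _]] := overlap N5 ab0 ab0 ab0 ba0.
set k := col m0.
have K : forall a b S, a != b -> deg col a b -> mid a b S -> col S = k.
  by move=> a b S ab D mS; apply: (const N5 nP ab ab0 D D0 mS mm0).
have F : forall a b, a != b -> deg col a b ->
    (col [set a] != k) || (col [set~ b] != k).
  move=> a b ab D.
  have [h1|h1] := eqVneq (col [set a]) k; last by apply/orP; left.
  have [h2|h2] := eqVneq (col [set~ b]) k; last by apply/orP; right.
  exfalso; apply: nM; apply: (@mono_of n col a b k ab) => S /andP[aS bS].
  have [->|S1] := eqVneq S [set a]; first by [].
  have [->|S2] := eqVneq S [set~ b]; first by [].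
  by apply: (K a b) => //; apply/and4P.
pose good p q := exists w, (w != p) /\ (w != q) /\ (deg col p w \/ deg col q w).
have c2 : forall p q : 'I_(n+2), #|[set p; q]| + 2 <= n + 2.
  by move=> p q; move: (cardS2 p q); set r := #|[set p; q]|; lia.
have goodK : forall p q, p != q -> good p q -> col [set p; q] = k.
  move=> p q pq [w [wp [wq [D|D]]]].
    apply: (K p w) => //; first by rewrite eq_sym.
    apply/and4P; split; first by mem.
    - by mem.
    - by apply: (@notset1 _ _ _ q); mem; rewrite eq_sym.
    - exact: notsetC1.
  apply: (K q w) => //; first by rewrite eq_sym.
  apply/and4P; split; first by mem.
  - by mem.
  - by apply: (@notset1 _ _ _ p); mem.
  - exact: notsetC1.
have goodC : forall p q, good p q -> good q p.
  by move=> p q [w [wp [wq [D|D]]]]; exists w; do 2 (split => //); [right|left].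
have bad2 : forall p q r, p != q -> p != r -> q != r -> ~ good p q -> ~ good p r -> False.
  move=> p q r pq pr qr ng1 ng2.
  case: (@degOr _ col q r nP) => D.
    by apply: ng1; exists r; do 2 (split; first by rewrite eq_sym); right.
  by apply: ng2; exists q; split; [rewrite eq_sym | split => //; right].
have Bs : forall a a', a != a' -> col [set a] != k -> col [set a'] != k -> False.
  move=> a a' aa' h1 h2.
  have h : #|[set a; a']| + 3 <= n + 2.
    by move: (cardS2 a a') n3; set r := #|[set a; a']|; lia.
  have [x [y [z [xW yW zW [xy xz] yz]]]] := three_out h.
  move: xW yW zW; rewrite !inE !negb_or.
  move=> /andP[xa xa'] /andP[ya ya'] /andP[za za'].
  have Ptwo : forall p q r, p != q -> p != r -> q != r ->
      p != a -> p != a' -> q != a -> q != a' -> r != a -> r != a' ->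
      good p q -> good p r -> False.
    move=> p q r pq pr qr pa pa' qa qa' ra ra' g1 g2; apply: nP.
    apply: (@P_of' _ col k [set p; q] [set p; r] [set a] [set a']).
    - exact: goodK.
    - exact: goodK.
    - exact: bool_neq.
    - exact: bool_neq.
    - by apply: (@incW _ _ _ q r); mem.
    - by apply: (@incW _ _ _ a a'); mem.
    - by apply: (@incW _ _ _ p a); mem.
    - by apply: (@incW _ _ _ p a'); mem.
    - by apply: (@incW _ _ _ p a); mem.
    - by apply: (@incW _ _ _ p a'); mem.
  have yx : y != x by rewrite eq_sym.
  have zx : z != x by rewrite eq_sym.
  have zy : z != y by rewrite eq_sym.
  case: (classic (good x y)) => gxy; case: (classic (good x z)) => gxz.
  - exact: (Ptwo x y z xy xz yz xa xa' ya ya' za za' gxy gxz).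
  - case: (classic (good y z)) => gyz.
      exact: (Ptwo y x z yx yz xz ya ya' xa xa' za za' (goodC _ _ gxy) gyz).
    exact: (bad2 z x y zx zy xy (fun g => gxz (goodC _ _ g)) (fun g => gyz (goodC _ _ g))).
  - case: (classic (good y z)) => gyz.
      exact: (Ptwo z x y zx zy xy za za' xa xa' ya ya' (goodC _ _ gxz) (goodC _ _ gyz)).
    exact: (bad2 y x z yx yz xz (fun g => gxy (goodC _ _ g)) gyz).
  - exact: (bad2 x y z xy xz yz gxy gxz).
pose good' p q := exists w, (w != p) /\ (w != q) /\ (deg col w p \/ deg col w q).
have cC : forall p q : 'I_(n+2), 2 <= #|~: [set p; q]|.
  move=> p q; move: (cardsC [set p; q]) (cardS2 p q); rewrite card_ord.
  set r := #|[set p; q]|; set t := #|~: [set p; q]|; lia.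
have good'K : forall p q, p != q -> good' p q -> col (~: [set p; q]) = k.
  move=> p q pq [w [wp [wq [D|D]]]].
    apply: (K w p) => //.
    apply/and4P; split; first by mem.
    - by mem.
    - exact: card_set1_ge.
    - apply/eqP => E; have : q \in [set~ p] by mem; rewrite eq_sym.
      by rewrite -E; mem.
  apply: (K w q) => //.
  apply/and4P; split; first by mem.
  - by mem.
  - exact: card_set1_ge.
  - apply/eqP => E; have : p \in [set~ q] by mem.
    by rewrite -E; mem.
have good'C : forall p q, good' p q -> good' q p.
  by move=> p q [w [wp [wq [D|D]]]]; exists w; do 2 (split => //); [right|left].
have bad2' : forall p q r, p != q -> p != r -> q != r -> ~ good' p q -> ~ good' p r -> False.
  move=> p q r pq pr qr ng1 ng2.
  case: (@degOr _ col q r nP) => D.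
    by apply: ng2; exists q; split; [rewrite eq_sym | split => //; right].
  by apply: ng1; exists r; split; [rewrite eq_sym | split; [rewrite eq_sym | right]].
have Bc : forall a a', a != a' -> col [set~ a] != k -> col [set~ a'] != k -> False.
  move=> a a' aa' h1 h2.
  have h : #|[set a; a']| + 3 <= n + 2.
    by move: (cardS2 a a') n3; set r := #|[set a; a']|; lia.
  have [x [y [z [xW yW zW [xy xz] yz]]]] := three_out h.
  move: xW yW zW; rewrite !inE !negb_or.
  move=> /andP[xa xa'] /andP[ya ya'] /andP[za za'].
  have Ptwo : forall p q r, p != q -> p != r -> q != r ->
      p != a -> p != a' -> q != a -> q != a' -> r != a -> r != a' ->
      good' p q -> good' p r -> False.
    move=> p q r pq pr qr pa pa' qa qa' ra ra' g1 g2; apply: nP.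
    apply: (@P_of' _ col k (~: [set p; q]) (~: [set p; r]) [set~ a] [set~ a']).
    - exact: good'K.
    - exact: good'K.
    - exact: bool_neq.
    - exact: bool_neq.
    - by apply: (@incW _ _ _ r q); mem.
    - by apply: (@incW _ _ _ a' a); mem.
    - by apply: (@incW _ _ _ a p); mem.
    - by apply: (@incW _ _ _ a' p); mem.
    - by apply: (@incW _ _ _ a p); mem.
    - by apply: (@incW _ _ _ a' p); mem.
  have yx : y != x by rewrite eq_sym.
  have zx : z != x by rewrite eq_sym.
  have zy : z != y by rewrite eq_sym.
  case: (classic (good' x y)) => gxy; case: (classic (good' x z)) => gxz.
  - exact: (Ptwo x y z xy xz yz xa xa' ya ya' za za' gxy gxz).
  - case: (classic (good' y z)) => gyz.
      exact: (Ptwo y x z yx yz xz ya ya' xa xa' za za' (good'C _ _ gxy) gyz).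
    exact: (bad2' z x y zx zy xy (fun g => gxz (good'C _ _ g)) (fun g => gyz (good'C _ _ g))).
  - case: (classic (good' y z)) => gyz.
      exact: (Ptwo z x y zx zy xy za za' xa xa' ya ya' (good'C _ _ gxz) (good'C _ _ gyz)).
    exact: (bad2' y x z yx yz xz (fun g => gxy (good'C _ _ g)) gyz).
  - exact: (bad2' x y z xy xz yz gxy gxz).
pose SB := [set v | col [set v] != k].
pose SC := [set v | col [set~ v] != k].
have cs : #|SB| <= 1.
  rewrite leqNgt; apply/negP => /card_gt1P [u [v [hu hv uv]]].
  by rewrite !inE in hu hv; exact: (Bs u v uv hu hv).
have cc : #|SC| <= 1.
  rewrite leqNgt; apply/negP => /card_gt1P [u [v [hu hv uv]]].
  by rewrite !inE in hu hv; exact: (Bc u v uv hu hv).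
have cB : #|SB :|: SC| + 2 <= n + 2.
  move: (cardUle SB SC) cs cc n3.
  set r := #|SB :|: SC|; set t := #|SB|; set u := #|SC|; lia.
have [a [b [aW bW ab]]] := two_out cB.
move: aW bW; rewrite !inE !negb_or !negbK => /andP[/eqP a1 /eqP a2] /andP[/eqP b1 /eqP b2].
have ba : b != a by rewrite eq_sym.
case: (@degOr _ col a b nP) => D.
  by move: (F a b ab D); rewrite a1 b2 eqxx.
by move: (F b a ba D); rewrite b1 a2 eqxx.
Qed.

Theorem lemma12 (n : nat) : 3 <= n ->
  is_poset_EH_number (par_comp (antichain2 blue) (antichain2 red)) n (n + 2).
Proof.
move=> n3; split.
  move=> col; case: (classic (has_copy PP col)) => [h|nP]; first by left.
  case: (classic (has_mono_Q n col)) => [h|nM]; first by right.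
  exfalso; exact: (main n3 nP nM).
move=> N hN; exact: (lower n3 hN).
Qed.
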